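(* Given an instance of the Squared Metric Facility Location Problem, let $\alpha$ be the vector of final budgets produced by Algorithm $A1$. Then for every facility $i$ and cities $j$ and $j'$, $\sqrt{\alpha_j} \le \sqrt{\alpha_{j'}} +\sqrt{c_{ij'}} + \sqrt{c_{ij}}$.
   Context: Facility Location instance: finite disjoint sets $C$ (cities), $F$ (facilities), non-negative $c_{ij}$, $f_i$. Squared metric: $\sqrt{c_{ij}}\le \sqrt{c_{ij'}}+\sqrt{c_{i'j'}}+\sqrt{c_{i'j}}$ for all $i,i'\in F$, $j,j'\in C$. Algorithm $A1$: initially all facilities are unopened and all cities unconnected ($U:=C$); each city $j$ has a budget $\alpha_j=0$; an unconnected city $j$ offers $\max(\alpha_j-c_{ij},0)$ to each unopened facility $i$. While $U\ne\emptyset$, the budgets of all unconnected cities increase continuously at the same rate (connected cities' budgets stay fixed) until: (a) for some unconnected $j$ and open $i$, $\alpha_j=c_{ij}$: connect $j$ to $i$ and remove $j$ from $U$; or (b) for some unopened $i$, $\sum_{j\in U}\max(\alpha_j-c_{ij},0)=f_i$: open $i$ and connect to $i$ every unconnected $j$ with $\alpha_j\ge c_{ij}$, removing them from $U$. *)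

(* Defs.v *)
From HB Require Import structures.
From mathcomp Require Import all_boot all_order all_algebra.
From mathcomp Require Import Rstruct.
From Stdlib Require Import Reals.
Set Implicit Arguments. Unset Strict Implicit. Unset Printing Implicit Defensive.
Import Order.TTheory GRing.Theory Num.Theory.
Local Open Scope ring_scope.

Definition squared_metric (C F : finType) (c : F -> C -> R) : Prop :=
  forall (i i' : F) (j j' : C),
    Num.sqrt (c i j) <= Num.sqrt (c i j') + Num.sqrt (c i' j') + Num.sqrt (c i' j).

(* A state of algorithm A1:
   - U    : the set of unconnected cities,
   - O    : the set of opened facilities,
   - time : the current time; every unconnected city has budget = time
            (all budgets start at 0 and grow at the same rate while unconnected),
   - frozen : the (fixed) budgets of connected cities. *)
Record A1state (C F : finType) := mkA1state {
  U : {set C};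
  O : {set F};
  time : R;
  frozen : C -> R
}.

Section A1.
Variables (C F : finType) (c : F -> C -> R) (f : F -> R).

Definition budget (st : A1state C F) (j : C) : R :=
  if j \in U st then time st else frozen st j.

Definition offer (st : A1state C F) (i : F) : R :=
  \sum_(j in U st) Num.max (budget st j - c i j) 0.

Definition condA (st : A1state C F) (j : C) (i : F) : Prop :=
  j \in U st /\ i \in O st /\ budget st j = c i j.

Definition condB (st : A1state C F) (i : F) : Prop :=
  i \notin O st /\ offer st i = f i.

Definition some_event (st : A1state C F) : Prop :=
  (exists j i, condA st j i) \/ (exists i, condB st i).

Definition at_time (st : A1state C F) (s : R) : A1state C F :=
  mkA1state (U st) (O st) s (frozen st).

(* One step of A1 (only while U is nonempty):
   - event (a): connect j to the open facility i;
   - event (b): open i and connect every unconnected j with alpha_j >= c_ij;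
   - continuous growth: the time (= budgets of unconnected cities) increases
     from t to t' > t, where t' is the first moment at which an event
     condition holds (no event condition holds on [t, t')). *)
Inductive A1step : A1state C F -> A1state C F -> Prop :=
  | stepA st j i :
      U st != set0 -> condA st j i ->
      A1step st (mkA1state (U st :\ j) (O st) (time st) (budget st))
  | stepB st i :
      U st != set0 -> condB st i ->
      A1step st (mkA1state (U st :\: [set j in U st | c i j <= budget st j])
                           (i |: O st) (time st) (budget st))
  | stepGrow st t' :
      U st != set0 -> time st < t' ->
      (forall s, time st <= s -> s < t' -> ~ some_event (at_time st s)) ->
      some_event (at_time st t') ->
      A1step st (at_time st t').

Definition A1init : A1state C F := mkA1state setT set0 0 (fun _ => 0).

Inductive A1reach : A1state C F -> Prop :=
  | reach_init : A1reach A1init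
  | reach_step st st' : A1reach st -> A1step st st' -> A1reach st'.

Definition A1_final_budgets (alpha : C -> R) : Prop :=
  exists st, A1reach st /\ U st = set0 /\ alpha = budget st.

End A1.

(* Main.v *)
Require Import Defs.
From HB Require Import structures.
From mathcomp Require Import all_boot all_order all_algebra.
From mathcomp Require Import Rstruct.
From Stdlib Require Import Reals.
From mathcomp Require Import lra.
Import Order.TTheory GRing.Theory Num.Theory.
Local Open Scope ring_scope.

Section Inv.
Variables (C F : finType) (c : F -> C -> R) (f : F -> R).

Definition inv (st : A1state C F) : Prop :=
  (forall k i, k \in U st -> i \in O st -> time st <= c i k) /\
  (forall k, k \notin U st -> frozen st k <= time st) /\
  (forall j, j \notin U st -> exists2 i, i \in O st &
     (c i j <= frozen st j /\ forall k, k \notin U st ->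
        frozen st k <= frozen st j \/ frozen st k <= c i k)).

Lemma budget_le st k : inv st -> budget st k <= time st.
Proof.
move=> [_ [H2 _]]; rewrite /budget; case: ifP => Hk //; apply: H2; by rewrite Hk.
Qed.

Lemma conn st (U' : {set C}) (O' : {set F}) : inv st -> U' \subset U st -> O st \subset O' ->
  (forall k i, k \in U' -> i \in O' -> time st <= c i k) ->
  (forall j, j \in U st -> j \notin U' -> exists2 i, i \in O' & c i j <= time st) ->
  inv (mkA1state U' O' (time st) (budget st)).
Proof.
move=> Hinv sU sO Ha Hnew.
have Hinv' := Hinv; move: Hinv' => [H1 [H2 H3]].
split; first exact: Ha.
split; first by move=> k _ /=; exact: budget_le.
move=> j /= Hj; case Hju: (j \in U st).
- have [i Hi Hc] := Hnew j Hju Hj.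
  exists i => //; split; first by rewrite /budget Hju.
  move=> k _; left; rewrite {2}/budget Hju; exact: budget_le.
- have [i Hi [Hc Hk]] := H3 j (negbT Hju).
  exists i; first exact: (subsetP sO).
  rewrite /budget Hju; split=> // k Hk'.
  case Hku: (k \in U st).
  + right; exact: H1.
  + exact: Hk (negbT Hku).
Qed.

Lemma step_inv st st' : inv st -> A1step c f st st' -> inv st'.
Proof.
move=> Hinv Hs; move: Hs Hinv.
case=> {st'} {st}.
- move=> st0 j i _ [Hj [Hi Hb]] Hinv; have [H1 [H2 H3]] := Hinv.
  apply: conn => //.
  + by apply/subsetP=> x; rewrite in_setD1 => /andP[].
  + by move=> k i0; rewrite in_setD1 => /andP[_ Hk] Hi0; exact: H1.
  + move=> j0 Hj0; rewrite in_setD1 Hj0 andbT negbK => /eqP ->.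
    exists i => //; move: Hb; rewrite /budget Hj => ->; exact: lexx.
- move=> st0 i _ [Hi Hb] Hinv; have [H1 [H2 H3]] := Hinv.
  apply: conn => //.
  + by apply/subsetP=> x; rewrite in_setD => /andP[].
  + by apply/subsetP=> x Hx; rewrite in_setU1 Hx orbT.
  + move=> k i0; rewrite in_setD inE => /andP[/negP Hn Hk].
    rewrite in_setU1 => /orP[/eqP -> | Hi0]; last exact: H1.
    rewrite Hk /= in Hn; move: Hn; rewrite /budget Hk => Hn.
    by apply/ltW; rewrite ltNge; apply/negP.
  + move=> j0 Hj0; rewrite in_setD Hj0 andbT negbK inE Hj0 /= => Hc.
    exists i; first by rewrite in_setU1 eqxx.
    by move: Hc; rewrite /budget Hj0.
- move=> st0 t' _ Ht Hno _ Hinv; have [H1 [H2 H3]] := Hinv.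
  split; last split.
  + move=> k i /= Hk Hi.
    rewrite leNgt; apply/negP => Hlt.
    apply: (Hno (c i k)) => //; first exact: H1.
    left; exists k, i; split=> //; split=> //=.
    by rewrite /budget /= Hk.
  + move=> k /= Hk; apply: le_trans (ltW Ht); exact: H2.
  + exact: H3.
Qed.

Lemma reach_inv st : A1reach c f st -> inv st.
Proof.
elim=> [|s s' _ IH Hs]; last exact: step_inv IH Hs.
split; first by move=> k i _; rewrite /= inE.
by split=> j /=; rewrite inE.
Qed.

End Inv.

Theorem lemma1 (C F : finType) (c : F -> C -> R) (f : F -> R)
  (c_ge0 : forall i j, 0 <= c i j) (f_ge0 : forall i, 0 <= f i)
  (hsq : squared_metric c) (alpha : C -> R)
  (halpha : A1_final_budgets c f alpha) :
  forall (i : F) (j j' : C),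
    Num.sqrt (alpha j) <= Num.sqrt (alpha j') + Num.sqrt (c i j') + Num.sqrt (c i j).
Proof.
move=> i j j'.
have [st [Hr [HU ->]]] := halpha.
have [_ [_ H3]] := @reach_inv _ _ _ _ _ Hr.
have Hb : forall k, budget st k = frozen st k by move=> k; rewrite /budget HU inE.
rewrite !Hb.
have Hn : forall k, k \notin U st by move=> k; rewrite HU inE.
have [i' _ [Hc Hk]] := H3 j' (Hn j').
have Hm := hsq i' i j j'.
have Hsa : Num.sqrt (c i' j') <= Num.sqrt (frozen st j') by exact: ler_wsqrtr.
have P1 := sqrtr_ge0 (c i j'); have P2 := sqrtr_ge0 (c i j).
have P3 := sqrtr_ge0 (c i' j').
case: (Hk j (Hn j)) => Hj; have Hs := ler_wsqrtr Hj; lra.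
Qed.
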